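(* Let $(Z^n_k)_{n\in\mathbb N,1\le k\le n}$ be a triangular array of nonnegative, uniformly integrable random variables such that for each $n\in\mathbb N$ the random variables $Z^n_1,\dots,Z^n_n$ are pairwise uncorrelated. Then $\frac1n\sum_{k=1}^n(Z^n_k-EZ^n_k)\to0$ in probability as $n\to\infty$.
   Context: Random variables are only assumed integrable (no finite second moments are assumed); ''pairwise uncorrelated'' means $E[Z^n_kZ^n_l]=E[Z^n_k]E[Z^n_l]$ for $k\ne l$ (with the product integrable). *)

(* Defs.v *)
From HB Require Import structures.
From mathcomp Require Import all_boot all_order all_algebra.
From mathcomp Require Import all_classical all_reals all_analysis.
Set Implicit Arguments. Unset Strict Implicit. Unset Printing Implicit Defensive.
Import Order.TTheory GRing.Theory Num.Theory.
Import numFieldNormedType.Exports.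
Local Open Scope classical_set_scope.
Local Open Scope ring_scope.

Definition uniformly_integrable d (T : measurableType d) (R : realType)
  (P : probability T R) (I : Type) (A : set I) (F : I -> T -> R) : Prop :=
  (forall i, A i -> P.-integrable setT (EFin \o F i)) /\
  (forall eps : R, 0 < eps -> exists M : R, forall M', M <= M' ->
     forall i, A i ->
       (\int[P]_(x in [set x | (M' < `|F i x|)%R]) (`|F i x|)%:E <= eps%:E)%E).

Definition pairwise_uncorrelated d (T : measurableType d) (R : realType)
  (P : probability T R) (I : Type) (A : set I) (X : I -> T -> R) : Prop :=
  forall k l, A k -> A l -> k <> l ->
    P.-integrable setT (EFin \o (X k \* X l)) /\
    ('E_P[X k \* X l] = 'E_P[X k] * 'E_P[X l])%E.

Definition cvg_in_probability_to0 d (T : measurableType d) (R : realType)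
  (P : probability T R) (Y : nat -> T -> R) : Prop :=
  forall eps : R, 0 < eps ->
    P [set x | eps <= `|Y n x|] @[n --> \oo] --> 0%E.

(* Main.v *)
Require Import Defs.
From HB Require Import structures.
From mathcomp Require Import all_boot all_order all_algebra.
From mathcomp Require Import all_classical all_reals all_analysis.
From mathcomp Require Import ring lra.
Import Order.TTheory GRing.Theory Num.Theory.
Import numFieldNormedType.Exports.
Local Open Scope classical_set_scope.
Local Open Scope ring_scope.
Set Implicit Arguments. Unset Strict Implicit. Unset Printing Implicit Defensive.

Section H.
Context d (T : measurableType d) (R : realType) (P : probability T R).

Lemma bdd_Lfun (f : T -> R) (K : R) : measurable_fun setT f ->
  (forall x, `|f x| <= K) -> f \in Lfun P 1.
Proof.
move=> mf fK; apply/Lfun1_integrable; apply: measurable_bounded_integrable => //.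
  by apply: (le_lt_trans (probability_le1 P measurableT)); rewrite ltry.
exists K; split; first exact: num_real.
move=> M KM x _; exact: le_trans (fK x) (ltW KM).
Qed.

Lemma markov1 (f : T -> R) (a : R) : measurable_fun setT f ->
  (forall x, 0 <= f x) -> 0 < a ->
  (a%:E * P [set x | (a <= f x)%R] <= 'E_P[f])%E.
Proof.
move=> mf f0 a0.
have fm : f \in mfun by rewrite inE.
have := @markov _ _ _ P (mfun_Sub fm) id a a0 (@measurable_id _ _ _) (fun r h => h)
  (fun x y _ _ h => h).
rewrite !mfun_valP /=.
have -> : [set x | (a%:E <= `|(f x)%:E|)%E] = [set x | a <= f x].
  by apply/seteqP; split => x /=; rewrite lee_fin ger0_norm.
suff -> : (id \o Num.norm \o f) = f by [].
by apply/funext => x /=; rewrite ger0_norm.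
Qed.

Lemma markov2 (f : T -> R) (a : R) : measurable_fun setT f -> 0 < a ->
  ((a ^+ 2)%:E * P [set x | (a <= `|f x|)%R] <= 'E_P[fun x => (f x ^+ 2)%R])%E.
Proof.
move=> mf a0.
have fm : f \in mfun by rewrite inE.
have := @markov _ _ _ P (mfun_Sub fm) (fun r => r ^+ 2) a a0 _ _ _.
rewrite !mfun_valP /=.
have -> : [set x | (a%:E <= `|(f x)%:E|)%E] = [set x | a <= `|f x|].
  by apply/seteqP; split => x /=; rewrite lee_fin.
have -> : ((fun r => r ^+ 2) \o Num.norm \o f) = (fun x => (f x ^+ 2)%R).
  by apply/funext => x /=; rewrite real_normK// num_real.
apply; first exact: measurable_realfun.exprn_measurable.
- by move=> r _; exact: sqr_ge0.
- by move=> x y; rewrite !nnegrE => x0 y0; rewrite ler_sqr.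
Qed.


Lemma meas_lt (f : T -> R) (a : R) : measurable_fun setT f ->
  measurable [set x | a < f x].
Proof.
move=> mf; have := mf measurableT _ (@measurable_itv _ `]a, +oo[).
rewrite setTI; congr measurable; apply/seteqP; split => x /=;
  by rewrite in_itv /= andbT.
Qed.

Lemma meas_le (f : T -> R) (a : R) : measurable_fun setT f ->
  measurable [set x | a <= f x].
Proof.
move=> mf; have := mf measurableT _ (@measurable_itv _ `[a, +oo[).
rewrite setTI; congr measurable; apply/seteqP; split => x /=;
  by rewrite in_itv /= andbT.
Qed.

Lemma Lfun_sumf (r : seq nat) (F : nat -> T -> R) :
  (forall i, i \in r -> F i \in Lfun P 1) ->
  (fun x => \sum_(i <- r) F i x) \in Lfun P 1.
Proof.
elim: r => [|a r IH] H.
  have -> : (fun x => \sum_(i <- [::]) F i x) = cst 0.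
    by apply/funext => x; rewrite big_nil.
  exact: Lfun_cst.
have -> : (fun x => \sum_(i <- a :: r) F i x) =
    F a + (fun x => \sum_(i <- r) F i x).
  by apply/funext => x; rewrite big_cons.
apply: rpredD; first by apply: H; rewrite mem_head.
by apply: IH => i ir; apply: H; rewrite inE ir orbT.
Qed.

Lemma E_sumf (r : seq nat) (F : nat -> T -> R) :
  (forall i, i \in r -> F i \in Lfun P 1) ->
  ('E_P[fun x => (\sum_(i <- r) F i x)%R] = \sum_(i <- r) 'E_P[F i])%E.
Proof.
elim: r => [|a r IH] H.
  have -> : (fun x => \sum_(i <- [::]) F i x) = cst 0.
    by apply/funext => x; rewrite big_nil.
  by rewrite expectation_cst big_nil.
have -> : (fun x => \sum_(i <- a :: r) F i x) =
    F a \+ (fun x => \sum_(i <- r) F i x).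
  by apply/funext => x; rewrite big_cons.
rewrite expectationD; first last.
- by apply: Lfun_sumf => i ir; apply: H; rewrite inE ir orbT.
- by apply: H; rewrite mem_head.
by rewrite IH ?big_cons// => i ir; apply: H; rewrite inE ir orbT.
Qed.

Lemma trunc_gap (f : T -> R) (M δ : R) : measurable_fun setT f ->
  (forall x, 0 <= f x) -> f \in Lfun P 1 -> 0 <= M ->
  (\int[P]_(x in [set x | (M < `|f x|)%R]) (`|f x|)%:E <= δ%:E)%E ->
  0 <= fine ('E_P[f])%E - fine ('E_P[fun x => Num.min (f x) M])%E <= δ.
Proof.
move=> mf f0 fL M0 hI.
set g := fun x => Num.min (f x) M.
have mg : measurable_fun setT g by exact: measurable_realfun.measurable_minr.
have g0 x : 0 <= g x by rewrite /g le_min f0.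
have gL : g \in Lfun P 1.
  by apply: (@bdd_Lfun _ M mg) => x; rewrite ger0_norm// /g ge_min lexx orbT.
rewrite (_ : fine _ - fine _ = fine ('E_P[f \- g])%E); last first.
  by rewrite expectationB// fineB// expectation_fin_num.
have h0 x : 0 <= (f \- g) x by rewrite /= subr_ge0 /g ge_min lexx.
have hL : f \- g \in Lfun P 1 by exact: rpredB.
apply/andP; split.
  by apply: fine_ge0; apply: expectation_ge0.
have -> : δ = fine δ%:E by [].
apply: fine_le; first exact: expectation_fin_num.
  by [].
set D := [set x | M < `|f x|].
have mD : measurable D by apply: meas_lt; exact: measurableT_comp.
rewrite unlock.
have -> : (\int[P]_x ((f \- g) x)%:E = \int[P]_(x in D) ((f \- g) x)%:E)%E.
  rewrite [RHS]integral_mkcond; apply: eq_integral => x _; rewrite patchE.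
  case: ifPn => // /negP xD; congr EFin.
  have fM : f x <= M by rewrite leNgt; apply/negP => h; apply: xD;
    rewrite inE /D /= ger0_norm.
  by rewrite /= /g min_l// subrr.
apply: le_trans hI.
apply: ge0_le_integral => //.
- by move=> x _; rewrite lee_fin.
- apply/measurable_realfun.measurable_EFinP; apply: measurable_funS (measurable_realfun.measurable_funB mf mg) => //.
- apply/measurable_realfun.measurable_EFinP; apply: measurable_funS (measurableT_comp _ mf) => //.
- move=> x _; rewrite lee_fin ger0_norm// /= lerBlDr lerDl.
  exact: g0.
Qed.


Lemma Efine_sum (r : seq nat) (F : nat -> T -> R) :
  (forall i, i \in r -> F i \in Lfun P 1) ->
  fine ('E_P[fun x => (\sum_(i <- r) F i x)%R])%E = \sum_(i <- r) fine ('E_P[F i])%E.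
Proof.
move=> H; rewrite E_sumf// big_seq -sum_fine => [|i ir].
  by rewrite -big_seq.
by apply: expectation_fin_num; exact: H.
Qed.

Lemma Efine_scale (F : T -> R) (a : R) : F \in Lfun P 1 ->
  fine ('E_P[fun x => (a * F x)%R])%E = a * fine ('E_P[F])%E.
Proof.
move=> FL; rewrite (_ : (fun x => _) = a \o* F); last first.
  by apply/funext => x /=; rewrite mulrC.
rewrite expectationZl//.
by rewrite fineM// expectation_fin_num.
Qed.

Lemma Efine_B (F G : T -> R) : F \in Lfun P 1 -> G \in Lfun P 1 ->
  fine ('E_P[fun x => (F x - G x)%R])%E = fine ('E_P[F])%E - fine ('E_P[G])%E.
Proof.
move=> FL GL; rewrite (_ : (fun x => _) = F \- G); last by apply/funext.
rewrite expectationB//.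
by rewrite fineB// expectation_fin_num.
Qed.

Lemma E_bnd (g : T -> R) (M : R) : measurable_fun setT g ->
  (forall x, 0 <= g x <= M) -> 0 <= fine ('E_P[g])%E <= M.
Proof.
move=> mg gM.
have g0 x : 0 <= g x by have /andP[] := gM x.
have M0 : 0 <= M by have /andP[h1 h2] := gM point; exact: le_trans h2.
apply/andP; split; first by apply: fine_ge0; apply: expectation_ge0.
have -> : M = fine (M%:E) by [].
rewrite -(expectation_cst P M).
apply: fine_le; first (apply: expectation_fin_num; apply: (@bdd_Lfun _ M mg)).
- by move=> x; rewrite ger0_norm//; have /andP[] := gM x.
- by rewrite expectation_cst.
apply: expectation_le => //.
by apply: aeW => x; have /andP[] := gM x.
Qed.

Lemma markov1f (f : T -> R) (a : R) : measurable_fun setT f ->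
  (forall x, 0 <= f x) -> f \in Lfun P 1 -> 0 < a ->
  a * fine (P [set x | (a <= f x)%R]) <= fine ('E_P[f])%E.
Proof.
move=> mf f0 fL a0; have h := markov1 mf f0 a0.
have fS : P [set x | (a <= f x)%R] \is a fin_num.
  by rewrite fin_num_measure//; exact: meas_le.
rewrite -[X in X * _]/(fine a%:E) -fineM//; apply: fine_le => //.
  by rewrite fin_numM.
exact: expectation_fin_num.
Qed.

Lemma markov2f (f : T -> R) (a : R) : measurable_fun setT f ->
  (fun x => (f x ^+ 2)%R) \in Lfun P 1 -> 0 < a ->
  a ^+ 2 * fine (P [set x | (a <= `|f x|)%R]) <= fine ('E_P[fun x => (f x ^+ 2)%R])%E.
Proof.
move=> mf fL a0; have := markov2 mf a0.
have mS : measurable [set x | (a <= `|f x|)%R].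
  by apply: meas_le; exact: measurableT_comp.
move=> h.
have fS : P [set x | (a <= `|f x|)%R] \is a fin_num by rewrite fin_num_measure.
rewrite -[X in X * _]/(fine (a ^+ 2)%:E) -fineM//; apply: fine_le => //.
  by rewrite fin_numM.
exact: expectation_fin_num.
Qed.


Lemma Lfun_meas (f : T -> R) : f \in Lfun P 1 -> measurable_fun setT f.
Proof. by move=> /sub_Lfun_mfun; rewrite inE. Qed.

Lemma Lfun_scalef (F : T -> R) (a : R) : F \in Lfun P 1 ->
  (fun x => a * F x) \in Lfun P 1.
Proof.
move=> FL; rewrite (_ : (fun x => _) = a \o* F); last first.
  by apply/funext => x /=; rewrite mulrC.
exact: Lfun_scale.
Qed.

Lemma Lfun_subf (F G : T -> R) : F \in Lfun P 1 -> G \in Lfun P 1 ->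
  (fun x => F x - G x) \in Lfun P 1.
Proof. by move=> FL GL; rewrite (_ : (fun x => _) = F - G)//; exact: rpredB. Qed.

Lemma Lfun_subc (F : T -> R) (c : R) : F \in Lfun P 1 ->
  (fun x => F x - c) \in Lfun P 1.
Proof. by move=> FL; apply: (@Lfun_subf F (cst c)) => //; exact: Lfun_cst. Qed.


Lemma avg_ge (n : nat) (F : nat -> R) (lo : R) : (0 < n)%N ->
  (forall k, (1 <= k <= n)%N -> lo <= F k) ->
  lo <= n%:R^-1 * \sum_(1 <= k < n.+1) F k.
Proof.
move=> n0 H; have nR : 0 < n%:R :> R by rewrite ltr0n.
rewrite ler_pdivlMl// mulr_natl.
have := @ler_sum_nat _ 1 n.+1 (fun _ => lo) F H.
by rewrite sumr_const_nat subn1.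
Qed.

Lemma avg_le (n : nat) (F : nat -> R) (hi : R) : (0 < n)%N ->
  (forall k, (1 <= k <= n)%N -> F k <= hi) ->
  n%:R^-1 * \sum_(1 <= k < n.+1) F k <= hi.
Proof.
move=> n0 H; have nR : 0 < n%:R :> R by rewrite ltr0n.
rewrite ler_pdivrMl// mulr_natl.
have := @ler_sum_nat _ 1 n.+1 F (fun _ => hi) H.
by rewrite sumr_const_nat subn1.
Qed.

Lemma bound_n (n : nat) (Zf : nat -> T -> R) (eps M δ C : R) :
  (0 < n)%N -> 0 < eps -> 0 < M -> 0 <= δ -> δ <= eps / 3 -> 0 <= C ->
  (forall k, measurable_fun setT (Zf k)) ->
  (forall k, (1 <= k <= n)%N -> forall x, 0 <= Zf k x) ->
  (forall k, (1 <= k <= n)%N -> Zf k \in Lfun P 1) ->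
  (forall k, (1 <= k <= n)%N -> fine ('E_P[Zf k])%E <= C) ->
  (forall k, (1 <= k <= n)%N ->
     (\int[P]_(x in [set x | (M < `|Zf k x|)%R]) (`|Zf k x|)%:E <= δ%:E)%E) ->
  (forall k l, (1 <= k <= n)%N -> (1 <= l <= n)%N -> k <> l ->
     ('E_P[Zf k \* Zf l] = 'E_P[Zf k] * 'E_P[Zf l])%E) ->
  fine (P [set x | (eps <= `|n%:R^-1 *
      \sum_(1 <= k < n.+1) (Zf k x - fine ('E_P[Zf k])%E)|)%R])
   <= 9 / eps ^+ 2 * (M ^+ 2 / n%:R + 2 * C * δ) + 3 * δ / eps.
Proof.
move=> n0 e0 M0 d0 de C0 mZ Z0 ZL ZC Ztail Zunc.
have rng k : k \in index_iota 1 n.+1 -> (1 <= k <= n)%N.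
  by rewrite mem_index_iota ltnS.
set z := fun k => fine ('E_P[Zf k])%E.
set Tr := fun k x => Num.min (Zf k x) M.
set t := fun k => fine ('E_P[Tr k])%E.
have mT k : measurable_fun setT (Tr k).
  exact: measurable_realfun.measurable_minr.
have TM k : (1 <= k <= n)%N -> forall x, 0 <= Tr k x <= M.
  move=> hk x; rewrite /Tr le_min Z0// (ltW M0) /= ge_min lexx orbT.
  by [].
have TL k : (1 <= k <= n)%N -> Tr k \in Lfun P 1.
  move=> hk; apply: (@bdd_Lfun _ M (mT k)) => x.
  by have /andP[h1 h2] := TM k hk x; rewrite ger0_norm.
have tM k : (1 <= k <= n)%N -> 0 <= t k <= M.
  by move=> hk; apply: E_bnd => //; exact: TM.
have gap k : (1 <= k <= n)%N -> 0 <= z k - t k <= δ.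
  move=> hk; exact: (trunc_gap (mZ k) (Z0 k hk) (ZL k hk) (ltW M0) (Ztail k hk)).
set c := fun k l => fine ('E_P[fun x => ((Tr k x - t k) * (Tr l x - t l))%R])%E.
have cdiag k : (1 <= k <= n)%N -> c k k <= M ^+ 2.
  move=> hk.
  have mm : measurable_fun setT (fun x => (Tr k x - t k) * (Tr k x - t k)).
    apply: measurable_realfun.measurable_funM;
      apply: measurable_realfun.measurable_funB => //; exact: measurable_cst.
  have bb x : 0 <= (Tr k x - t k) * (Tr k x - t k) <= M ^+ 2.
    have /andP[h1 h2] := TM k hk x; have /andP[h3 h4] := tM k hk.
    have u1 : 0 <= M - (Tr k x - t k) by lra.
    have u2 : 0 <= M + (Tr k x - t k) by lra.
    have u3 := mulr_ge0 u1 u2.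
    rewrite expr2; apply/andP; split.
      by rewrite -expr2 sqr_ge0.
    move: (Tr k x - t k) u3 => a u3; nra.
  by have /andP[] := E_bnd mm bb.
have coff k l : (1 <= k <= n)%N -> (1 <= l <= n)%N -> k <> l ->
    c k l <= 2 * C * δ.
  move=> hk hl kl.
  have pL : (fun x => Tr k x * Tr l x) \in Lfun P 1.
    apply: (@bdd_Lfun _ (M ^+ 2)); first exact: measurable_realfun.measurable_funM.
    move=> x; have/andP[a1 a2] := TM k hk x; have/andP[b1 b2] := TM l hl x.
    by rewrite normrM ger0_norm // ger0_norm // expr2; exact: ler_pM.
  have E1 : ('E_P[fun x => ((Tr k x - t k) * (Tr l x - t l))%R] =
      'E_P[fun x => (Tr k x * Tr l x)%R] - 'E_P[Tr k] * 'E_P[Tr l])%E.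
    have := covarianceE (TL k hk) (TL l hl) pL.
    by rewrite covariance.unlock => h; exact: h.
  have cE : c k l = fine ('E_P[fun x => (Tr k x * Tr l x)%R])%E - t k * t l.
    rewrite /c E1 fineB ?fineM ?fin_numM ?expectation_fin_num//; exact: TL.
  have le1 : fine ('E_P[fun x => (Tr k x * Tr l x)%R])%E <= z k * z l.
    have h : ('E_P[fun x => (Tr k x * Tr l x)%R] <= 'E_P[Zf k \* Zf l])%E.
      apply: expectation_le.
      - exact: measurable_realfun.measurable_funM.
      - exact: measurable_realfun.measurable_funM.
      - move=> x; have/andP[a1 _] := TM k hk x; have/andP[b1 _] := TM l hl x.
        exact: mulr_ge0.
      - by move=> x; apply: mulr_ge0; apply: Z0.
      - apply: aeW => x /=.
        have/andP[a1 _] := TM k hk x; have/andP[b1 _] := TM l hl x.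
        by apply: ler_pM => //; rewrite /Tr ge_min lexx.
    move: h; rewrite Zunc// => h.
    rewrite /z -fineM ?expectation_fin_num//; try exact: ZL.
    apply: fine_le => //; first exact: expectation_fin_num.
    by rewrite fin_numM// expectation_fin_num//; exact: ZL.
  rewrite cE.
  have := gap k hk; have := gap l hl; have := tM k hk; have := tM l hl.
  have := ZC k hk; have := ZC l hl; move: le1.
  rewrite -/(z k) -/(z l).
  move: (z k) (z l) (t k) (t l) (fine _) => zk zl tk tl e.
  move=> h1 h2 h3 /andP[h4 h5] /andP[h6 h7] /andP[h8 h9] /andP[h10 h11].
  have q1 : 0 <= (C - zk) * (zl - tl) by apply: mulr_ge0; lra.
  have q2 : 0 <= zk * (δ - (zl - tl)) by apply: mulr_ge0; lra.
  have q3 : 0 <= (C - tl) * (zk - tk) by apply: mulr_ge0; lra.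
  have q4 : 0 <= tl * (δ - (zk - tk)) by apply: mulr_ge0; lra.
  nra.
have nR : 0 < n%:R :> R by rewrite ltr0n.
pose A := fun x => n%:R^-1 * \sum_(1 <= k < n.+1) (Tr k x - t k).
pose B := fun x => n%:R^-1 * \sum_(1 <= k < n.+1) (Zf k x - Tr k x).
pose cc := n%:R^-1 * \sum_(1 <= k < n.+1) (z k - t k).
have SE x : n%:R^-1 * \sum_(1 <= k < n.+1) (Zf k x - fine ('E_P[Zf k])%E)
    = A x + B x - cc.
  rewrite /A /B /cc -mulrDr -mulrBr -big_split -sumrB /=; congr (_ * _).
  by apply: eq_bigr => k _; rewrite /z; lra.
have cc0 : 0 <= cc <= δ.
  apply/andP; split; [apply: avg_ge|apply: avg_le] => // k hk;
    by have /andP[] := gap k hk.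
have B0 x : 0 <= B x.
  apply: avg_ge => // k hk; rewrite subr_ge0 /Tr ge_min lexx//.
have SL : (fun x => n%:R^-1 * \sum_(1 <= k < n.+1) (Zf k x - fine ('E_P[Zf k])%E))
    \in Lfun P 1.
  apply: Lfun_scalef; apply: (@Lfun_sumf _ (fun k x => Zf k x - fine ('E_P[Zf k])%E)).
  by move=> k hk; apply: Lfun_subc; apply: ZL; exact: rng.
have AL : A \in Lfun P 1.
  apply: Lfun_scalef; apply: (@Lfun_sumf _ (fun k x => Tr k x - t k)).
  by move=> k hk; apply: Lfun_subc; apply: TL; exact: rng.
have BL : B \in Lfun P 1.
  apply: Lfun_scalef; apply: (@Lfun_sumf _ (fun k x => Zf k x - Tr k x)).
  by move=> k hk; apply: Lfun_subf; [apply: ZL|apply: TL]; exact: rng.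
have mA := Lfun_meas AL; have mB := Lfun_meas BL; have mS := Lfun_meas SL.
pose SA := [set x | eps / 3 <= `|A x|].
pose SB := [set x | eps / 3 <= B x].
have mSA : measurable SA by apply: meas_le; exact: measurableT_comp.
have mSB : measurable SB by apply: meas_le.
have mSS : measurable [set x | (eps <= `|n%:R^-1 *
      \sum_(1 <= k < n.+1) (Zf k x - fine ('E_P[Zf k])%E)|)%R].
  by apply: meas_le; exact: measurableT_comp.
have sub : [set x | (eps <= `|n%:R^-1 *
      \sum_(1 <= k < n.+1) (Zf k x - fine ('E_P[Zf k])%E)|)%R] `<=` SA `|` SB.
  move=> x /=; rewrite SE => h.
  have [hA|hA] := leP (eps / 3) `|A x|; first by left.
  have [hB|hB] := leP (eps / 3) (B x); first by right.
  exfalso; have := ler_normD (A x) (B x - cc); rewrite addrA.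
  have hc : `|B x - cc| <= eps / 3.
    have := B0 x; have /andP[c1 c2] := cc0.
    rewrite ler_norml => h1.
    apply/andP; split; lra.
  move: (`|A x + B x - cc|) (`|A x|) (`|B x - cc|) h hA hc => u v w.
  lra.
have Pun : fine (P [set x | (eps <= `|n%:R^-1 *
      \sum_(1 <= k < n.+1) (Zf k x - fine ('E_P[Zf k])%E)|)%R])
    <= fine (P SA) + fine (P SB).
  rewrite -fineD ?fin_num_measure//; apply: fine_le.
  - exact: fin_num_measure.
  - by rewrite fin_numD !fin_num_measure.
  apply: le_trans (measureU2 P mSA mSB).
  by apply: le_measure => //; rewrite inE//; exact: measurableU.
have e3 : 0 < eps / 3 by lra.
have EB : fine ('E_P[B])%E = cc.
  rewrite /B (@Efine_scale (fun x => \sum_(1 <= k < n.+1) (Zf k x - Tr k x))); last first.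
    apply: (@Lfun_sumf _ (fun k x => Zf k x - Tr k x)).
    by move=> k hk; apply: Lfun_subf; [apply: ZL|apply: TL]; exact: rng.
  rewrite (@Efine_sum _ (fun k x => Zf k x - Tr k x)); last first.
    by move=> k hk; apply: Lfun_subf; [apply: ZL|apply: TL]; exact: rng.
  rewrite /cc; congr (_ * _); apply: eq_big_nat => k hk.
  by rewrite Efine_B//; [apply: ZL|apply: TL].
have pB : fine (P SB) <= 3 * δ / eps.
  have := markov1f mB B0 BL e3; rewrite EB => h.
  have -> : 3 * δ / eps = (eps / 3)^-1 * δ.
    by field; rewrite gt_eqF.
  rewrite ler_pdivlMl//; have /andP[_ h2] := cc0; exact: le_trans h h2.
have pkL k l : (1 <= k <= n)%N -> (1 <= l <= n)%N ->
    (fun x => (Tr k x - t k) * (Tr l x - t l)) \in Lfun P 1.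
  move=> hk hl; apply: (@bdd_Lfun _ (M ^+ 2)).
    apply: measurable_realfun.measurable_funM;
      apply: measurable_realfun.measurable_funB => //; exact: measurable_cst.
  move=> x; rewrite normrM expr2.
  have dk : `|Tr k x - t k| <= M.
    have /andP[h1 h2] := TM k hk x; have /andP[h3 h4] := tM k hk.
    rewrite ler_norml; apply/andP; split; lra.
  have dl : `|Tr l x - t l| <= M.
    have /andP[h1 h2] := TM l hl x; have /andP[h3 h4] := tM l hl.
    rewrite ler_norml; apply/andP; split; lra.
  exact: ler_pM.
have A2E : (fun x => A x ^+ 2) = (fun x => n%:R^-1 ^+ 2 *
    \sum_(1 <= k < n.+1) \sum_(1 <= l < n.+1) (Tr k x - t k) * (Tr l x - t l)).
  apply/funext => x; rewrite /A exprMn [X in _ * X]expr2 mulr_suml; congr (_ * _).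
  by apply: eq_bigr => k _; rewrite mulr_sumr.
have inL k : (1 <= k <= n)%N -> (fun x =>
    \sum_(1 <= l < n.+1) (Tr k x - t k) * (Tr l x - t l)) \in Lfun P 1.
  move=> hk.
  apply: (@Lfun_sumf _ (fun l x => (Tr k x - t k) * (Tr l x - t l))).
  by move=> l hl; apply: pkL => //; exact: rng.
have A2L : (fun x => A x ^+ 2) \in Lfun P 1.
  rewrite A2E; apply: Lfun_scalef.
  apply: (@Lfun_sumf _ (fun k x =>
    \sum_(1 <= l < n.+1) (Tr k x - t k) * (Tr l x - t l))).
  by move=> k hk; apply: inL; exact: rng.
have EA2 : fine ('E_P[fun x => (A x ^+ 2)%R])%E =
    n%:R^-1 ^+ 2 * \sum_(1 <= k < n.+1) \sum_(1 <= l < n.+1) c k l.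
  rewrite A2E (@Efine_scale (fun x => \sum_(1 <= k < n.+1)
    \sum_(1 <= l < n.+1) (Tr k x - t k) * (Tr l x - t l))); last first.
    apply: (@Lfun_sumf _ (fun k x =>
      \sum_(1 <= l < n.+1) (Tr k x - t k) * (Tr l x - t l))).
    by move=> k hk; apply: inL; exact: rng.
  rewrite (@Efine_sum _ (fun k x =>
      \sum_(1 <= l < n.+1) (Tr k x - t k) * (Tr l x - t l))); last first.
    by move=> k hk; apply: inL; exact: rng.
  congr (_ * _); apply: eq_big_nat => k hk.
  rewrite (@Efine_sum _ (fun l x => (Tr k x - t k) * (Tr l x - t l)))//.
  by move=> l hl; apply: pkL => //; exact: rng.
have X0 : 0 <= 2 * C * δ by apply: mulr_ge0 => //; apply: mulr_ge0.
have rowb k : (1 <= k <= n)%N ->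
    \sum_(1 <= l < n.+1) c k l <= M ^+ 2 + n%:R * (2 * C * δ).
  move=> hk.
  apply: (@le_trans _ _ (\sum_(1 <= l < n.+1)
      ((if l == k then M ^+ 2 else 0) + 2 * C * δ))).
    apply: ler_sum_nat => l hl; case: eqP => [->|/nesym lk].
      by apply: (le_trans (cdiag k hk)); rewrite lerDl.
    by rewrite add0r; apply: coff.
  have hs : \sum_(1 <= l < n.+1) (if l == k then M ^+ 2 else 0) = M ^+ 2.
    rewrite (bigD1_seq k) /=; last exact: iota_uniq.
      by rewrite eqxx big1 ?addr0 // => l /negbTE ->.
    by rewrite mem_index_iota ltnS.
  rewrite big_split hs sumr_const_nat subn1 -[n.+1.-1]/n -(mulr_natl (2 * C * δ) n); exact: lexx.
have sumc : \sum_(1 <= k < n.+1) \sum_(1 <= l < n.+1) c k l <=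
    n%:R * (M ^+ 2 + n%:R * (2 * C * δ)).
  have := @ler_sum_nat _ 1 n.+1 _ (fun _ => M ^+ 2 + n%:R * (2 * C * δ)) rowb.
  by rewrite sumr_const_nat subn1 -[n.+1.-1]/n -(mulr_natl (M ^+ 2 + n%:R * (2 * C * δ)) n).
have pA : fine (P SA) <= 9 / eps ^+ 2 * (M ^+ 2 / n%:R + 2 * C * δ).
  have := markov2f mA A2L e3; rewrite EA2 => h.
  have h2 : (eps / 3) ^+ 2 * fine (P SA) <= M ^+ 2 / n%:R + 2 * C * δ.
    apply: (le_trans h).
    have -> : M ^+ 2 / n%:R + 2 * C * δ =
        n%:R^-1 ^+ 2 * (n%:R * (M ^+ 2 + n%:R * (2 * C * δ))).
      by field; rewrite gt_eqF.
    apply: ler_wpM2l => //; exact: exprn_ge0 (ltW (invr_gt0 _ _)).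
  have -> : 9 / eps ^+ 2 * (M ^+ 2 / n%:R + 2 * C * δ) =
      ((eps / 3) ^+ 2)^-1 * (M ^+ 2 / n%:R + 2 * C * δ).
    by field; rewrite (gt_eqF nR) (gt_eqF e0).
  by rewrite ler_pdivlMl// exprn_gt0.
apply: (le_trans Pun); exact: lerD.
Qed.

End H.

Unset Implicit Arguments. Set Strict Implicit. Set Printing Implicit Defensive.

Theorem mainTheorem14 (d : measure_display) (T : measurableType d)
  (R : realType) (P : probability T R) (Z : nat -> nat -> {RV P >-> R}) :
  (forall n k x, (1 <= k <= n)%N -> 0 <= Z n k x) ->
  uniformly_integrable P [set nk : nat * nat | (1 <= nk.2 <= nk.1)%N]
    (fun nk => Z nk.1 nk.2 : T -> R) ->
  (forall n, pairwise_uncorrelated P [set k : nat | (1 <= k <= n)%N]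
    (fun k => Z n k : T -> R)) ->
  cvg_in_probability_to0 P
    (fun n x => n%:R^-1 * \sum_(1 <= k < n.+1) (Z n k x - fine 'E_P[Z n k])).
Proof.
move=> Z0 [UIi UIt] unc eps e0.
have lemax (u v : R) : u <= Num.max u v by rewrite le_max lexx.
have gemin (u v : R) : Num.min u v <= u by rewrite ge_min lexx.
have ZL n k : (1 <= k <= n)%N -> (Z n k : T -> R) \in Lfun P 1.
  by move=> hk; apply/Lfun1_integrable; exact: (UIi (n, k)).
have mZ n k : measurable_fun setT (Z n k : T -> R) by exact: measurable_funPT.
have [M1 HM1] := UIt 1 ltr01.
pose M1' := Num.max M1 1.
have M1p : 0 < M1' by rewrite lt_max ltr01 orbT.
pose C := M1' + 1.
have C0 : 0 <= C by rewrite /C; apply: addr_ge0; [exact: ltW|exact: ler01].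
have ZC n k : (1 <= k <= n)%N -> fine ('E_P[Z n k])%E <= C.
  move=> hk.
  have h1 := HM1 M1' (lemax _ _) (n, k) hk; rewrite /= in h1.
  have := trunc_gap (mZ n k) (fun x => Z0 n k x hk) (ZL n k hk) (ltW M1p) h1.
  case/andP => _ h2.
  have mT : measurable_fun setT (fun x => Num.min (Z n k x) M1').
    exact: measurable_realfun.measurable_minr.
  have bT x : 0 <= Num.min (Z n k x) M1' <= M1'.
    by rewrite le_min Z0// (ltW M1p) /= ge_min lexx orbT.
  have /andP[_ h3] := @E_bnd _ _ _ P _ M1' mT bT.
  rewrite /C; move: h2 h3.
  move: (fine _) (fine _) => a b; lra.
apply/fine_cvgP; split.
  apply: nearW => n; apply: fin_num_measure; apply: meas_le.
  apply: measurableT_comp => //; apply: Lfun_meas.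
  apply: Lfun_scalef; apply: (@Lfun_sumf _ _ _ P _ (fun k x => Z n k x - fine ('E_P[Z n k])%E)).
  by move=> k; rewrite mem_index_iota ltnS => hk; apply: Lfun_subc; exact: ZL.
apply/cvgr0Pnorm_le => g g0.
pose a := 9 / eps ^+ 2.
pose b := 3 / eps.
have a0 : 0 < a by rewrite /a divr_gt0// exprn_gt0.
have b0 : 0 < b by rewrite /b divr_gt0.
pose K := 2 * a * C + b.
have K0 : 0 < K by rewrite /K; apply: ltr_wpDl => //; apply: mulr_ge0 => //;
  apply: mulr_ge0 => //; exact: ltW.
pose δ := Num.min (eps / 3) (g / (2 * K)).
have d0 : 0 < δ by rewrite lt_min; apply/andP; split; [lra|apply: divr_gt0 => //; lra].
have [M HM] := UIt δ d0.
pose M' := Num.max M 1.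
have Mp : 0 < M' by rewrite lt_max ltr01 orbT.
pose N := Num.Def.archi_bound (2 * a * M' ^+ 2 / g).
have HN : 2 * a * M' ^+ 2 / g < N%:R.
  apply: archi_boundP; apply: divr_ge0; last exact: ltW.
  by apply: mulr_ge0; [apply: mulr_ge0; [|exact: ltW]|exact: sqr_ge0].
near=> n.
have nN : (N.+1 <= n)%N by near: n; exact: nbhs_infty_ge.
have n0 : (0 < n)%N by apply: leq_trans nN.
have nR : 0 < n%:R :> R by rewrite ltr0n.
have hb := @bound_n _ _ _ P n (fun k => Z n k : T -> R) eps M' δ C n0 e0 Mp (ltW d0)
  (gemin _ _) C0 (mZ n) (fun k hk x => Z0 n k x hk) (ZL n) (ZC n)
  (fun k hk => HM M' (lemax _ _) (n, k) hk)
  (fun k l hk hl kl => (unc n k l hk hl kl).2).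
rewrite /= ger0_norm; last by apply: fine_ge0; exact: measure_ge0.
apply: (le_trans hb).
have -> : 9 / eps ^+ 2 * (M' ^+ 2 / n%:R + 2 * C * δ) + 3 * δ / eps =
    a * M' ^+ 2 / n%:R + δ * K.
  rewrite /K /a /b; move: (M') (C) (δ) => m c dd.
  by field; rewrite (gt_eqF nR) (gt_eqF e0).
have h1 : δ * K <= g / 2.
  have : δ <= g / (2 * K) by rewrite /δ ge_min lexx orbT.
  rewrite ler_pdivlMr; last by lra.
  rewrite (_ : δ * (2 * K) = 2 * (δ * K)); last by rewrite mulrCA.
  move: (δ * K) => u; lra.
have h2 : a * M' ^+ 2 / n%:R <= g / 2.
  rewrite ler_pdivrMr//.
  have nN' : (N%:R : R) <= n%:R by rewrite ler_nat; exact: ltnW.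
  have := lt_le_trans HN nN'; rewrite ltr_pdivrMr// => h.
  move: (a) (M') (g) (n%:R) h => aa mm gg nn h; lra.
lra.
Unshelve. all: end_near.
Qed.
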